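(* $R(K_4^*,2)=7$.
   Context: For a family $\mathcal{G}$ of graphs, $R(\mathcal{G},k)$ is the smallest $n$ such that every coloring of the edges of $K_n$ with $k$ colors contains a monochromatic subgraph isomorphic to some member of $\mathcal{G}$. $K_4^*$ is the family of graphs consisting of: $K_4$; the graph obtained from $K_4$ minus an edge by attaching a pendant edge at one of its two vertices of degree $2$; and the triangle with a pendant edge attached at each of its three vertices. *)

(* Defs.v *)
From Stdlib Require Import List.
From mathcomp Require Import all_boot.
Set Implicit Arguments. Unset Strict Implicit. Unset Printing Implicit Defensive.

(* A small graph pattern: [gv] vertices 0..gv-1, edge list [ge] (pairs of
   vertex indices < gv). *)
Record pattern := Pattern { gv : nat; ge : seq (nat * nat) }.

Definition K4 : pattern :=
  Pattern 4 [:: (0,1); (0,2); (0,3); (1,2); (1,3); (2,3)].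
Definition K4e_pendant : pattern :=
  Pattern 5 [:: (0,1); (0,2); (0,3); (1,2); (1,3); (2,4)].
Definition net : pattern :=
  Pattern 6 [:: (0,1); (0,2); (1,2); (0,3); (1,4); (2,5)].

Definition K4_star : seq pattern := [:: K4; K4e_pendant; net].

(* An edge colouring of K_n with k colours: a symmetric function on pairs of
   vertices (diagonal values irrelevant). *)
Definition edge_coloring (n k : nat) (c : 'I_n -> 'I_n -> 'I_k) : Prop :=
  forall x y : 'I_n, c x y = c y x.

Definition has_mono_copy (n k : nat) (c : 'I_n -> 'I_n -> 'I_k) (H : pattern) : Prop :=
  exists (f : 'I_(gv H) -> 'I_n) (col : 'I_k),
    injective f /\
    forall i j : 'I_(gv H), (val i, val j) \in ge H -> c (f i) (f j) = col.

Definition arrows (n k : nat) (F : seq pattern) : Prop :=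
  forall c : 'I_n -> 'I_n -> 'I_k, edge_coloring c ->
    exists2 H, List.In H F & has_mono_copy c H.

Definition ramsey_is (F : seq pattern) (k r : nat) : Prop :=
  arrows r k F /\ forall n, n < r -> ~ arrows n k F.

(* Main.v *)
Require Import Defs.
From mathcomp Require Import all_boot zify.
Set Implicit Arguments. Unset Strict Implicit.

Definition pairs7 : seq (nat*nat) := Eval vm_compute in
  [seq p <- [seq (i,j) | j <- iota 0 7, i <- iota 0 7] | p.1 < p.2].
Definition triples : seq (nat*nat*nat) := Eval vm_compute in
  [seq t <- flatten [seq [seq (a,b,c) | b <- iota 0 7, c <- iota 0 7] | a <- iota 0 7] | (t.1.1 < t.1.2) && (t.1.2 < t.2)].

Definition gl (l : seq bool) (i j : nat) : bool :=
  nth false l (index (minn i j, maxn i j) pairs7).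

Definition valid (g : nat -> nat -> bool) (k : nat) (s : seq nat) (col : bool) : bool :=
  let H := nth K4 K4_star k in
  [&& k < 3, uniq s, all (fun v => v < 7) s, size s == gv H &
   all (fun e => (nth 0 s e.1 != nth 0 s e.2) && (g (nth 0 s e.1) (nth 0 s e.2) == col)) (ge H)].

Definition cands (g : nat -> nat -> bool) (t : nat*nat*nat) : seq (nat * seq nat * bool) :=
  let: (a,b,c) := t in
  let col := g a b in
  if (g a c == col) && (g b c == col) then
  let rest := [seq v <- iota 0 7 | v \notin [:: a; b; c]] in
  [seq (0, [:: a; b; c; d], col) | d <- rest] ++
  flatten [seq [seq (1, [:: x.1.1; x.1.2; x.2; d; e], col) | d <- rest, e <- rest] | x <- [:: (a,b,c); (b,c,a); (a,c,b)]] ++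
  flatten [seq [seq (2, [:: a; b; c; d; e; f], col) | e <- rest, f <- rest] | d <- rest]
  else [::].

Fixpoint hasb T (a : T -> bool) (s : seq T) : bool :=
  if s is x :: s' then (if a x then true else hasb a s') else false.
Definition triplesN N := [seq t <- triples | t.2 < N].
Definition notinT (a b c d : nat) : bool := (d != a) && (d != b) && (d != c).
Definition finder (NN : nat) (g : nat -> nat -> bool) : bool :=
  hasb (fun t => let: (a,b,c) := t in let col := g a b in
    if (g a c == col) && (g b c == col) then
      if hasb (fun d => if notinT a b c d && (g a d == col) && (g b d == col) && (g c d == col)
                        then valid g 0 [:: a;b;c;d] col else false) (iota 0 NN) then true else
      if hasb (fun x => let: (x,y,z) := x in
             hasb (fun d => if notinT a b c d && (g x d == col) && (g y d == col) then
               hasb (fun e => if notinT a b c e && (e != d) && (g z e == col) then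
                    valid g 1 [:: x;y;z;d;e] col else false) (iota 0 NN) else false) (iota 0 NN))
             [:: (a,b,c); (b,c,a); (a,c,b)] then true else
      hasb (fun d => if notinT a b c d && (g a d == col) then
        hasb (fun e => if notinT a b c e && (e != d) && (g b e == col) then
          hasb (fun f => if notinT a b c f && (f != d) && (f != e) && (g c f == col) then
             valid g 2 [:: a;b;c;d;e;f] col else false) (iota 0 NN) else false) (iota 0 NN) else false) (iota 0 NN)
    else false) (triplesN NN).

Fixpoint all_lists (n : nat) (P : seq bool -> bool) : bool :=
  if n is n'.+1 then all_lists n' (fun l => P (true :: l)) && all_lists n' (fun l => P (false :: l))
  else P [::].

Definition idxtab : seq (seq nat) := Eval vm_compute in
  [seq [seq index (minn i j, maxn i j) pairs7 | j <- iota 0 7] | i <- iota 0 7].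
Definition mk (l : seq bool) : seq (seq bool) :=
  [seq [seq nth false l k | k <- r] | r <- idxtab].
Definition gm (m : seq (seq bool)) (i j : nat) : bool := nth false (nth [::] m i) j.
Definition finder2 (l : seq bool) : bool := finder 7 (gm (mk l)).
Definition m0 := Eval vm_compute in mk (nseq 21 true).


Definition F6 (l6 : seq bool) : bool := if finder 6 (gm (mk l6)) then true else
     all_lists 6 (fun l => finder 7 (gm (mk (l6 ++ l)))).

Lemma hasbP T (a : T -> bool) s : hasb a s -> exists x, a x.
Proof. by elim: s => //= x s IH; case: ifP => [H _|_ /IH]; [exists x|]. Qed.

Lemma all_listsP n P l : size l = n -> all_lists n P -> P l.
Proof.
elim: n P l => [|n IH] P [|b l] //= [Hs] /andP [H1 H2].
by case: b; [apply: (IH (fun l => P (true :: l))) | apply: (IH (fun l => P (false :: l)))].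
Qed.

Lemma hasbP' (T : eqType) (a : T -> bool) s : hasb a s -> exists2 x, x \in s & a x.
Proof.
elim: s => //= x s IH; case: ifP => [H _|_ /IH [y Hy Hay]]; first by exists x; rewrite ?inE ?eqxx.
by exists y; rewrite // inE Hy orbT.
Qed.

Lemma triples_ok : all (fun t => (t.1.1 < t.1.2) && (t.1.2 < t.2)) triples.
Proof. by []. Qed.

Lemma finder_sound N g : finder N g ->
  exists k s col, valid g k s col /\ all (fun v => v < N) s.
Proof.
rewrite /finder => /hasbP' [[[a b] c]].
rewrite mem_filter /= => /andP [HcN /(allP triples_ok) /= /andP [Hab Hbc]].
have HaN : a < N by lia.
have HbN : b < N by lia.
case: ifP => // _.
case: ifP => [/hasbP' [d] | _].
  rewrite mem_iota add0n => /andP [_ HdN].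
  case: ifP => // _ Hv; exists 0, [:: a; b; c; d], (g a b); split => //=.
  by rewrite HaN HbN HcN HdN.
case: ifP => [H0 _ | _].
  move: H0.
  do 3 (case: ifP => [H0 _ | _]; first (move: H0 => /hasbP' [d]; rewrite mem_iota add0n => /andP [_ HdN];
  case: ifP => // _ /hasbP' [e]; rewrite mem_iota add0n => /andP [_ HeN];
  case: ifP => // _ Hv; eexists 1, _, _; split; [exact: Hv | by rewrite /= HaN HbN HcN HdN HeN])).
  by [].
move=> /hasbP' [d]; rewrite mem_iota add0n => /andP [_ HdN].
case: ifP => // _ /hasbP' [e]; rewrite mem_iota add0n => /andP [_ HeN].
case: ifP => // _ /hasbP' [f]; rewrite mem_iota add0n => /andP [_ HfN].
case: ifP => // _ Hv.
exists 2, [:: a; b; c; d; e; f], (g a b); split => //=.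
by rewrite HaN HbN HcN HdN HeN HfN.
Qed.

Definition colb (b : bool) : 'I_2 := if b then ord_max else ord0.

Lemma I2_0 (x : 'I_2) : (x == ord_max) = false -> x = ord0.
Proof. case: x => [[|[|m]] Hm] //= _. exact/val_inj. Qed.

Lemma valid_sound (c : 'I_7 -> 'I_7 -> 'I_2) (g : nat -> nat -> bool) k s col :
  (forall i j, i < 7 -> j < 7 -> i != j -> g i j = (c (inord i) (inord j) == ord_max)) ->
  valid g k s col -> exists2 H, List.In H K4_star & has_mono_copy c H.
Proof.
move=> Hg; rewrite /valid.
set H := nth K4 K4_star k.
case/and5P => Hk Hu Ha /eqP Hsz He.
exists H.
  rewrite /H; case: k Hk {H He Hsz} => [|[|[|]]] //= _; tauto.
have Hlt : forall i : 'I_(gv H), nth 0 s i < 7.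
  by move=> i; apply: (allP Ha); apply: mem_nth; rewrite Hsz.
exists (fun i => inord (nth 0 s i)), (colb col); split.
  move=> i j /(congr1 (@nat_of_ord 7)); rewrite !inordK ?Hlt // => /eqP.
  rewrite nth_uniq ?Hsz // => /eqP; apply: val_inj.
move=> i j /(allP He) /= /andP [Hne /eqP Hgc].
move: Hgc; rewrite Hg ?Hlt //.
clear He; case: col; rewrite /colb; first by move=> /eqP.
exact: I2_0.
Qed.

Definition lc (c : 'I_7 -> 'I_7 -> 'I_2) : seq bool :=
  [seq c (inord p.1) (inord p.2) == ord_max | p <- pairs7].

Lemma idxtab_ok : all (fun i => (size (nth [::] idxtab i) == 7) && all (fun j =>
   (nth 0 (nth [::] idxtab i) j == index (minn i j, maxn i j) pairs7) &&
   ((i != j) ==> ((minn i j, maxn i j) \in pairs7))) (iota 0 7)) (iota 0 7).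
Proof. by []. Qed.

Lemma gm_spec c : edge_coloring c -> forall i j, i < 7 -> j < 7 -> i != j ->
  gm (mk (lc c)) i j = (c (inord i) (inord j) == ord_max).
Proof.
move=> Hc i j Hi Hj Hij.
have := allP idxtab_ok i; rewrite mem_iota Hi => /(_ isT) /andP [/eqP Hsz /allP /(_ j)].
rewrite mem_iota Hj => /(_ isT) /andP [/eqP Hidx]; rewrite Hij /= => Hin.
rewrite /gm /mk (nth_map [::]); last exact: Hi.
rewrite (nth_map 0); last first.
  by rewrite Hsz.
rewrite Hidx /lc (nth_map (0,0)) ?index_mem // nth_index //=.
by case: (leqP i j) => Hle //; rewrite Hc.
Qed.


Lemma gm_mk l i j : i < 7 -> j < 7 ->
  gm (mk l) i j = nth false l (index (minn i j, maxn i j) pairs7).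
Proof.
move=> Hi Hj.
have := allP idxtab_ok i; rewrite mem_iota Hi => /(_ isT) /andP [/eqP Hsz /allP /(_ j)].
rewrite mem_iota Hj => /(_ isT) /andP [/eqP Hidx _].
rewrite /gm /mk (nth_map [::]); last exact: Hi.
by rewrite (nth_map 0) ?Hsz // Hidx.
Qed.

Lemma idx6_ok : all (fun i => all (fun j =>
   (i != j) ==> (index (minn i j, maxn i j) pairs7 < 15)) (iota 0 6)) (iota 0 6).
Proof. by vm_compute. Qed.

Lemma gm_cat l l' i j : size l = 15 -> i < 6 -> j < 6 -> i != j -> gm (mk (l ++ l')) i j = gm (mk l) i j.
Proof.
move=> Hs Hi Hj Hij; rewrite !gm_mk; try lia.
have := allP idx6_ok i; rewrite mem_iota Hi => /(_ isT) /allP /(_ j).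
rewrite mem_iota Hj Hij => /(_ isT) /= H.
by rewrite nth_cat Hs H.
Qed.

Lemma valid_ext g g' k s col : valid g k s col -> all (fun v => v < 6) s ->
  (forall i j, i < 6 -> j < 6 -> i != j -> g i j = g' i j) -> valid g' k s col.
Proof.
rewrite /valid => /and5P [-> -> -> -> He] Hs Hgg /=.
have Hn : forall n, nth 0 s n < 6.
  move=> n; case: (ltnP n (size s)) => Hn; first exact: (allP Hs _ (mem_nth 0 Hn)).
  by rewrite nth_default.
move: He; apply: sub_all => e /andP [Hne /eqP <-]; by rewrite Hne /= Hgg ?Hn.
Qed.

Lemma big_check : all_lists 15 F6.
Proof. vm_compute. reflexivity. Qed.

Lemma upper : arrows 7 2 K4_star.
Proof.
move=> c Hc.
have Hl : size (lc c) = 21 by rewrite size_map.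
have Hsz : size (take 15 (lc c)) = 15 by rewrite size_take Hl.
have := @all_listsP 15 F6 _ Hsz big_check; rewrite /F6.
case: ifP => [/finder_sound [k [s [col [Hv Hs]]]] _ | _].
  apply: (valid_sound (gm_spec Hc)); apply: (valid_ext Hv Hs) => i j Hi Hj Hij.
  by rewrite -{2}(cat_take_drop 15 (lc c)) gm_cat.
have Hsz' : size (drop 15 (lc c)) = 6 by rewrite size_drop Hl.
move/(all_listsP Hsz'); rewrite cat_take_drop => /finder_sound [k [s [col [Hv _]]]].
exact: valid_sound (gm_spec Hc) Hv.
Qed.

Definition bip n (x y : 'I_n) : 'I_2 := if (x < 3) == (y < 3) then ord0 else ord_max.

Lemma bip_col n : edge_coloring (@bip n).
Proof. by move=> x y; rewrite /bip eq_sym. Qed.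

Lemma bip_no n m (f : 'I_m -> 'I_n) col (i0 i1 i2 i3 : 'I_m) : n <= 6 ->
  injective f -> i0 != i1 -> i0 != i2 -> i0 != i3 -> i1 != i2 -> i1 != i3 -> i2 != i3 ->
  bip (f i0) (f i1) = col -> bip (f i0) (f i2) = col -> bip (f i1) (f i2) = col ->
  bip (f i0) (f i3) = col -> False.
Proof.
move=> Hn Hf H01 H02 H03 H12 H13 H23.
have D : forall a b, a != b -> (f a : nat) != f b.
  by move=> a b Hab; apply/eqP => /val_inj /Hf /eqP; rewrite (negbTE Hab).
move: (D _ _ H01) (D _ _ H02) (D _ _ H03) (D _ _ H12) (D _ _ H13) (D _ _ H23).
move: (ltn_ord (f i0)) (ltn_ord (f i1)) (ltn_ord (f i2)) (ltn_ord (f i3)).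
rewrite /bip.
case: (f i0 < 3) / idP; case: (f i1 < 3) / idP; case: (f i2 < 3) / idP;
case: (f i3 < 3) / idP => //= *; subst col; try lia; done.
Qed.

Lemma lower n : n < 7 -> ~ arrows n 2 K4_star.
Proof.
move=> Hn /(_ (@bip n) (@bip_col n)) [H HI [f [col [Hf He]]]].
have Hn' : n <= 6 by [].
case: HI => [<-|[<-|[<-|[]]]] in f Hf He *.
- apply: (@bip_no n 4 f col (@Ordinal 4 0 isT) (@Ordinal 4 1 isT) (@Ordinal 4 2 isT) (@Ordinal 4 3 isT)) => //; exact: He.
- apply: (@bip_no n 5 f col (@Ordinal 5 0 isT) (@Ordinal 5 1 isT) (@Ordinal 5 2 isT) (@Ordinal 5 3 isT)) => //; exact: He.
- apply: (@bip_no n 6 f col (@Ordinal 6 0 isT) (@Ordinal 6 1 isT) (@Ordinal 6 2 isT) (@Ordinal 6 3 isT)) => //; exact: He.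
Qed.

Theorem lemma2 : ramsey_is K4_star 2 7.
Proof. split; [exact: upper | exact: lower]. Qed.
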